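(* Let $f:\mathbb R\to B_2$ have a left limit at every point of $\mathbb R\cup\{\infty\}$ and be left continuous at every point of $\mathbb R$, and extend $f$ to $\mathbb R\cup\{\infty\}$ by $f(\infty)=f(\infty-0)$. Let $\mu:\mathrm{Sym}^-\to B_2$ be the function given by $\mu\big([[a_1,b_1))\Delta\cdots\Delta[[a_n,b_n))\big)=f(a_1)\oplus f(b_1)\oplus\cdots\oplus f(a_n)\oplus f(b_n)$ for $a_1,\dots,a_n,b_1,\dots,b_n\in\mathbb R\cup\{\infty\}$. Then $\mu$ is a measure.
   Context: $B_2=\{0,1\}$, $\oplus$ addition modulo 2, $\Delta$ symmetric difference. For $t\in\mathbb R\cup\{\infty\}$, $f$ has a left limit at $t$ if there is $t'<t$ (real) such that $f$ is constant on $(t',t)$; this constant is $f(t-0)$. $f$ is left continuous at $t\in\mathbb R$ if $f(t)=f(t-0)$. For $a,b\in\mathbb R\cup\{\infty\}$ the symmetric interval is $[[a,b))=[a,b)$ if $a<b$, $=[b,a)$ if $b<a$, $=\emptyset$ if $a=b$ (subsets of $\mathbb R$). $\mathrm{Sym}^-$ is the family of subsets of $\mathbb R$ generated by these intervals under $\Delta$ and $\cap$; its elements are finite symmetric differences of such intervals. A function $\mu:\mathrm{Sym}^-\to B_2$ is a measure if for every sequence of pairwise disjoint sets of $\mathrm{Sym}^-$ whose union lies in $\mathrm{Sym}^-$, only finitely many have $\mu$-value 1 and $\mu$ of the union is their number modulo 2. *)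

(* Defs.v *)
(* concrete reals R; R ∪ {∞} is [option R] with [None] = ∞;
   B_2 = bool, ⊕ = xorb; subsets of R are predicates [R -> Prop]. *)
From Stdlib Require Import Reals List.
Open Scope R_scope.

Definition symint (a b : option R) : R -> Prop :=
  fun x => match a, b with
  | Some a, Some b => (a <= x < b) \/ (b <= x < a)
  | Some a, None => a <= x
  | None, Some b => b <= x
  | None, None => False
  end.

Definition symdiff (S T : R -> Prop) : R -> Prop :=
  fun x => (S x /\ ~ T x) \/ (T x /\ ~ S x).

Definition setI (S T : R -> Prop) : R -> Prop := fun x => S x /\ T x.

Inductive SymM : (R -> Prop) -> Prop :=
| SymM_int : forall a b, SymM (symint a b)
| SymM_D : forall S T, SymM S -> SymM T -> SymM (symdiff S T)
| SymM_I : forall S T, SymM S -> SymM T -> SymM (setI S T).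

Definition symdiff_list (l : list (option R * option R)) : R -> Prop :=
  fold_right (fun p S => symdiff (symint (fst p) (snd p)) S) (fun _ => False) l.

Definition left_lim_at (f : R -> bool) (t : option R) (c : bool) : Prop :=
  match t with
  | Some s => exists t', t' < s /\ forall x, t' < x < s -> f x = c
  | None => exists t', forall x, t' < x -> f x = c
  end.

Definition fext (f : R -> bool) (finf : bool) (t : option R) : bool :=
  match t with Some s => f s | None => finf end.

Definition xor_upto (mu : (R -> Prop) -> bool) (A : nat -> R -> Prop) (N : nat) : bool :=
  fold_right (fun n b => xorb (mu (A n)) b) false (seq 0 N).

Definition is_measure (mu : (R -> Prop) -> bool) : Prop :=
  forall A : nat -> R -> Prop,
    (forall n, SymM (A n)) ->
    (forall i j, i <> j -> forall x, A i x -> A j x -> False) ->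
    SymM (fun x => exists n, A n x) ->
    exists N : nat,
      (forall n, (N <= n)%nat -> mu (A n) = false) /\
      mu (fun x => exists n, A n x) = xor_upto mu A N.

(* Main.v *)
Require Import Defs.
From Stdlib Require Import Bool Reals List Lra Lia Classical FunctionalExtensionality PropExtensionality.
Open Scope R_scope.

Definition olt (s t : option R) : Prop :=
  match s, t with Some a, Some b => a < b | Some _, None => True | None, _ => False end.
Definition ole (s t : option R) : Prop :=
  match s, t with Some a, Some b => a <= b | _, None => True | None, Some _ => False end.
Definition inr (y : R) (z : option R) (t : option R) := ole (Some y) t /\ ole t z.
Definition CI (a : R) (h : option R) : R -> Prop := fun t => a <= t /\ olt (Some t) h.
Definition sl := symdiff_list.

Lemma set_ext (S T : R -> Prop) : (forall x, S x <-> T x) -> S = T.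
Proof. intro H; apply functional_extensionality; intro x; apply propositional_extensionality; auto. Qed.

Lemma symint_CI a h : ole (Some a) h -> forall t, symint (Some a) h t <-> CI a h t.
Proof. destruct h as [b|]; unfold CI; simpl; intros H t; split; intros; try lra; tauto. Qed.

Lemma canon a b : exists a' h, ole (Some a') h /\ forall t, symint a b t <-> CI a' h t.
Proof.
destruct a as [a|]; destruct b as [b|]; unfold CI; simpl.
- destruct (Rle_dec a b).
  + exists a, (Some b); simpl; split; [lra|]; intro t; split; intros; lra.
  + exists b, (Some a); simpl; split; [lra|]; intro t; split; intros; lra.
- exists a, None; simpl; split; [exact I|]; intro t; tauto.
- exists b, None; simpl; split; [exact I|]; intro t; tauto.
- exists 0, (Some 0); simpl; split; [lra|]; intro t; split; [tauto| lra].
Qed.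

Lemma clip_core lo hi y z (S : R -> Prop) : y <= lo -> ole hi z -> ole (Some y) z ->
  (forall t, S t <-> CI lo hi t) ->
  exists r, (forall t, symint (fst r) (snd r) t <-> S t) /\ inr y z (fst r) /\ inr y z (snd r).
Proof.
intros H1 H2 H3 HS.
assert (D : olt (Some lo) hi \/ ~ olt (Some lo) hi).
{ destruct hi as [b|]; simpl; [destruct (Rlt_dec lo b); tauto | tauto]. }
destruct D as [D|D].
- exists (Some lo, hi); simpl. split; [|split].
  + intro t; rewrite HS; apply symint_CI. destruct hi; simpl in *; try lra; tauto.
  + unfold inr; simpl; split; [lra|]. destruct hi, z; simpl in *; try lra; tauto.
  + unfold inr; split; destruct hi, z; simpl in *; try lra; tauto.
- exists (Some y, Some y); simpl. split; [|split].
  + intro t; rewrite HS; unfold CI; split; [lra|]. intros [Ha Hb]; exfalso; apply D;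
    destruct hi; simpl in *; try lra; tauto.
  + unfold inr; simpl; split; [lra| exact H3].
  + unfold inr; simpl; split; [lra| exact H3].
Qed.

Lemma clipCI a h y z : ole (Some y) z ->
  exists r, (forall t, symint (fst r) (snd r) t <-> CI a h t /\ CI y z t)
         /\ inr y z (fst r) /\ inr y z (snd r).
Proof.
intro Hyz.
destruct h as [b|]; destruct z as [c|].
- apply (clip_core (Rmax a y) (Some (Rmin b c))); simpl; auto.
  + apply Rmax_r.
  + apply Rmin_r.
  + intro t; unfold CI; simpl; unfold Rmax, Rmin;
    destruct (Rle_dec a y), (Rle_dec b c); split; intros; lra.
- apply (clip_core (Rmax a y) (Some b)); simpl; auto.
  + apply Rmax_r.
  + intro t; unfold CI; simpl; unfold Rmax;
    destruct (Rle_dec a y); split; intros; lra.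
- apply (clip_core (Rmax a y) (Some c)); simpl; auto.
  + apply Rmax_r.
  + lra.
  + intro t; unfold CI; simpl; unfold Rmax;
    destruct (Rle_dec a y); split; intros; lra.
- apply (clip_core (Rmax a y) None); simpl; auto.
  + apply Rmax_r.
  + intro t; unfold CI; simpl; unfold Rmax;
    destruct (Rle_dec a y); split; intros; lra.
Qed.

Lemma clip_int a b y z : ole (Some y) z ->
  exists r, (forall t, symint (fst r) (snd r) t <-> symint a b t /\ CI y z t)
         /\ inr y z (fst r) /\ inr y z (snd r).
Proof.
intro H. destruct (canon a b) as [a' [h [_ Hc]]].
destruct (clipCI a' h y z H) as [r [H1 H2]]. exists r; split; auto.
intro t; rewrite H1, Hc; tauto.
Qed.

Lemma inter_int a b c d : exists r,
  forall t, symint (fst r) (snd r) t <-> symint a b t /\ symint c d t.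
Proof.
destruct (canon c d) as [y [z [Hyz Hc]]].
destruct (clip_int a b y z Hyz) as [r [H1 _]]. exists r.
intro t; rewrite H1, Hc; tauto.
Qed.

Lemma list_inter (K : R -> Prop) (Q : option R * option R -> Prop) :
  (forall a b, exists r, (forall t, symint (fst r) (snd r) t <-> symint a b t /\ K t) /\ Q r) ->
  forall l, exists l', (forall t, sl l' t <-> sl l t /\ K t) /\ Forall Q l'.
Proof.
intros H l. induction l as [|[a b] l IH].
- exists nil; split; [intro t; simpl; tauto| constructor].
- destruct (H a b) as [r [Hr Qr]]. destruct IH as [l' [Hl' Ql']].
  exists (r :: l'); split; [|constructor; auto].
  intro t. unfold sl in *; simpl. unfold symdiff. rewrite Hr, Hl'. simpl. tauto.
Qed.

Lemma sl_app l1 l2 x : sl (l1 ++ l2) x <-> symdiff (sl l1) (sl l2) x.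
Proof.
induction l1 as [|p l1 IH]; unfold sl in *; simpl; unfold symdiff in *.
- tauto.
- rewrite IH. destruct (classic (symint (fst p) (snd p) x)),
  (classic (symdiff_list l1 x)), (classic (symdiff_list l2 x)); tauto.
Qed.

Definition SymL (S : R -> Prop) := exists l, forall t, S t <-> sl l t.

Lemma SymL_int a b : SymL (symint a b).
Proof. exists ((a,b)::nil); intro t; unfold sl; simpl; unfold symdiff; tauto. Qed.

Lemma SymL_ext S T : (forall t, S t <-> T t) -> SymL T -> SymL S.
Proof. intros H [l Hl]; exists l; intro t; rewrite H; auto. Qed.

Lemma SymL_D S T : SymL S -> SymL T -> SymL (symdiff S T).
Proof.
intros [l1 H1] [l2 H2]; exists (l1 ++ l2); intro t; rewrite sl_app; unfold symdiff;
rewrite H1, H2; tauto.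
Qed.

Lemma SymL_I S T : SymL S -> SymL T -> SymL (setI S T).
Proof.
intros [l1 H1] [l2 H2].
assert (G : exists l', forall t, sl l' t <-> sl l1 t /\ sl l2 t).
{ clear H2. induction l2 as [|[a b] l2 IH].
  - exists nil; intro t; unfold sl; simpl; tauto.
  - destruct (list_inter (symint a b) (fun _ => True)) with (l := l1) as [l3 [H3 _]].
    { intros a' b'. destruct (inter_int a' b' a b) as [r Hr]. exists r; auto. }
    destruct IH as [l4 H4]. exists (l3 ++ l4). intro t. rewrite sl_app; unfold symdiff.
    rewrite H3, H4. unfold sl; simpl; unfold symdiff. simpl. tauto. }
destruct G as [l' Hl']. exists l'. intro t; unfold setI; rewrite Hl', H1, H2; tauto.
Qed.

Lemma SymM_L S : SymM S -> SymL S.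
Proof.
induction 1.
- apply SymL_int.
- apply SymL_D; auto.
- apply SymL_I; auto.
Qed.

Fixpoint xs (g : nat -> bool) (N : nat) : bool :=
  match N with O => false | S N => xorb (xs g N) (g N) end.

Lemma fold_xor (g : nat -> bool) b0 s :
  fold_right (fun n b => xorb (g n) b) b0 s = xorb (fold_right (fun n b => xorb (g n) b) false s) b0.
Proof.
induction s; simpl. - destruct b0; auto. - rewrite IHs. destruct (g a), b0, (fold_right _ false s); auto.
Qed.

Lemma xor_upto_xs mu A N : xor_upto mu A N = xs (fun n => mu (A n)) N.
Proof.
induction N; [reflexivity|]. unfold xor_upto in *.
rewrite seq_S, fold_right_app; simpl xs; simpl fold_right at 2. rewrite fold_xor, IHN. destruct (mu (A N)), (xs _ N); auto.
Qed.

Lemma xs_ext g g' N : (forall n, (n < N)%nat -> g n = g' n) -> xs g N = xs g' N.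
Proof. induction N; simpl; intros H; auto. rewrite IHN, H; auto. Qed.

Lemma xs_extend g N : (forall n, (N <= n)%nat -> g n = false) -> forall k, xs g (N + k) = xs g N.
Proof.
intros H k; induction k; simpl. - rewrite Nat.add_0_r; auto.
- rewrite Nat.add_succ_r; simpl. rewrite IHk, H by lia. destruct (xs g N); auto.
Qed.

Lemma xs_extend' g N N' : (forall n, (N <= n)%nat -> g n = false) -> (N <= N')%nat -> xs g N' = xs g N.
Proof. intros H HN. replace N' with (N + (N' - N))%nat by lia. apply xs_extend; auto. Qed.

Lemma xs_flip g g' k c N : (k < N)%nat -> (forall n, n <> k -> g' n = g n) -> g' k = xorb (g k) c ->
  xs g' N = xorb (xs g N) c.
Proof.
intros Hk H1 H2. induction N; [lia|]. simpl.
destruct (Nat.eq_dec k N).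
- subst N. rewrite (xs_ext g' g) by (intros; apply H1; lia). rewrite H2.
  destruct (xs g k), (g k), c; auto.
- rewrite IHN by lia. rewrite H1 by auto. destruct (xs g N), (g N), c; auto.
Qed.

Lemma real_ind (P : R -> Prop) (m : R) :
 (forall x, x <= m -> P x) ->
 (forall x, P x -> exists d, 0 < d /\ forall y, x < y < x + d -> P y) ->
 (forall x, (exists d, 0 < d /\ forall y, x - d < y < x -> P y) -> P x) ->
 forall x, P x.
Proof.
intros H0 Hr Hl x0. apply NNPP; intro Hx0.
set (E := fun s => forall y, y <= s -> P y).
assert (Hb : bound E).
{ exists x0. intros s Hs. destruct (Rle_dec s x0); auto. exfalso; apply Hx0, Hs; lra. }
assert (Hne : exists s, E s) by (exists m; intros y Hy; apply H0; auto).
destruct (completeness E Hb Hne) as [s [Hub Hlub]].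
assert (Hlt : forall y, y < s -> P y).
{ intros y Hy. apply NNPP; intro Hn. assert (s <= y).
  { apply Hlub. intros e He. destruct (Rle_dec e y); auto. exfalso; apply Hn, He; lra. }
  lra. }
assert (Hs : P s) by (apply Hl; exists 1; split; [lra|]; intros; apply Hlt; lra).
destruct (Hr s Hs) as [d [Hd Hd']].
assert (HE : E (s + d/2)).
{ intros y Hy. destruct (Rlt_dec y s); auto. destruct (Req_dec y s). subst; auto. apply Hd'; lra. }
specialize (Hub _ HE). lra.
Qed.

Definition val (f : R -> bool) (finf : bool) (l : list (option R * option R)) : bool :=
  fold_right (fun p b => xorb (xorb (fext f finf (fst p)) (fext f finf (snd p))) b) false l.

Lemma val_app f finf l1 l2 : val f finf (l1 ++ l2) = xorb (val f finf l1) (val f finf l2).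
Proof.
induction l1; simpl; auto. unfold val in *; simpl. rewrite IHl1.
symmetry; apply xorb_assoc_reverse.
Qed.

Lemma val_const f finf y z c l : (forall t, inr y z t -> fext f finf t = c) ->
  Forall (fun p => inr y z (fst p) /\ inr y z (snd p)) l -> val f finf l = false.
Proof.
intros Hc HF. induction HF as [|p l [H1 H2] _ IH]; simpl; auto.
unfold val in *; simpl. rewrite IH, (Hc _ H1), (Hc _ H2). destruct c; auto.
Qed.

Definition RL (S : R -> Prop) := forall x, exists d, 0 < d /\ forall y, x <= y < x + d -> (S y <-> S x).

Lemma RL_CI a h : RL (CI a h).
Proof.
intro x. unfold CI. destruct h as [b|]; simpl.
- destruct (Rlt_dec x a).
  + exists (a - x); split; [lra|]; intros; split; intros; lra.
  + destruct (Rlt_dec x b).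
    * exists (b - x); split; [lra|]; intros; split; intros; lra.
    * exists 1; split; [lra|]; intros; split; intros; lra.
- destruct (Rlt_dec x a).
  + exists (a - x); split; [lra|]; intros; split; intros; lra.
  + exists 1; split; [lra|]; intros; split; intros; split; auto; lra.
Qed.

Lemma RL_bin (op : Prop -> Prop -> Prop) S T :
  (forall A B C D, (A <-> C) -> (B <-> D) -> (op A B <-> op C D)) ->
  RL S -> RL T -> RL (fun t => op (S t) (T t)).
Proof.
intros Hop HS HT x. destruct (HS x) as [d1 [P1 Q1]], (HT x) as [d2 [P2 Q2]].
exists (Rmin d1 d2). split. { apply Rmin_glb_lt; auto. }
intros y Hy. pose proof (Rmin_l d1 d2). pose proof (Rmin_r d1 d2).
apply Hop; [apply Q1 | apply Q2]; lra.
Qed.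

Lemma RL_SymM S : SymM S -> RL S.
Proof.
induction 1.
- destruct (canon a b) as [a' [h [_ Hc]]]. rewrite (set_ext _ _ Hc). apply RL_CI.
- apply (RL_bin (fun A B => (A /\ ~ B) \/ (B /\ ~ A))); auto. intros; tauto.
- apply (RL_bin and); auto. intros; tauto.
Qed.

Lemma lower_SymM S : SymM S -> exists m, forall t, S t -> m <= t.
Proof.
induction 1.
- destruct (canon a b) as [a' [h [_ Hc]]]. exists a'. intros t Ht. apply Hc in Ht. apply Ht.
- destruct IHSymM1 as [m1 H1], IHSymM2 as [m2 H2]. exists (Rmin m1 m2).
  intros t [[Ht _]|[Ht _]]; [apply H1 in Ht | apply H2 in Ht];
  pose proof (Rmin_l m1 m2); pose proof (Rmin_r m1 m2); lra.
- destruct IHSymM1 as [m1 H1]. exists m1. intros t [Ht _]; auto.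
Qed.

Lemma mu_ext (mu : (R -> Prop) -> bool) S T : (forall t, S t <-> T t) -> mu S = mu T.
Proof. intro H; rewrite (set_ext _ _ H); auto. Qed.

Lemma muD (mu : (R -> Prop) -> bool) f finf (Hm : forall l, mu (sl l) = val f finf l) S T W :
  SymL S -> SymL T -> (forall t, W t <-> symdiff S T t) -> mu W = xorb (mu S) (mu T).
Proof.
intros [l1 H1] [l2 H2] HW.
rewrite (mu_ext mu W (sl (l1 ++ l2))), (mu_ext mu S (sl l1)), (mu_ext mu T (sl l2)); auto.
- rewrite !Hm; apply val_app.
- intro t; rewrite HW, sl_app; unfold symdiff; rewrite H1, H2; tauto.
Qed.

Lemma mu_disj (mu : (R -> Prop) -> bool) f finf (Hm : forall l, mu (sl l) = val f finf l) S T W :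
  SymL S -> SymL T -> (forall t, S t -> T t -> False) -> (forall t, W t <-> S t \/ T t) ->
  mu W = xorb (mu S) (mu T).
Proof.
intros HS HT HD HW. apply (muD mu f finf Hm); auto.
intro t; rewrite HW; unfold symdiff; specialize (HD t); tauto.
Qed.

Lemma SymL_clip S y z : SymL S -> ole (Some y) z -> SymL (fun t => S t /\ CI y z t).
Proof.
intros HS Hyz. apply (SymL_ext _ (setI S (symint (Some y) z))).
- intro t; unfold setI; rewrite symint_CI; auto; tauto.
- apply SymL_I; auto; apply SymL_int.
Qed.

Lemma mu_const (mu : (R -> Prop) -> bool) f finf (Hm : forall l, mu (sl l) = val f finf l) S y z c :
  SymL S -> ole (Some y) z -> (forall t, inr y z t -> fext f finf t = c) ->
  mu (fun t => S t /\ CI y z t) = false.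
Proof.
intros [l Hl] Hyz Hc.
destruct (list_inter (CI y z) (fun p => inr y z (fst p) /\ inr y z (snd p))) with (l := l)
  as [l' [H1 H2]].
{ intros a b. destruct (clip_int a b y z Hyz) as [r [Hr Qr]]. exists r; auto. }
rewrite (mu_ext mu _ (sl l')).
- rewrite Hm. apply (val_const f finf y z c); auto.
- intro t; rewrite H1, Hl; tauto.
Qed.

Theorem theorem6p4 (f : R -> bool) (finf : bool)
  (Hlim : forall t : option R, exists c, left_lim_at f t c)
  (Hcont : forall s : R, left_lim_at f (Some s) (f s))
  (Hinf : left_lim_at f None finf)
  (mu : (R -> Prop) -> bool)
  (Hmu : forall l : list (option R * option R), l <> nil ->
     mu (symdiff_list l) =
     fold_right (fun p b => xorb (xorb (fext f finf (fst p)) (fext f finf (snd p))) b)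
                false l) :
  is_measure mu.
Proof.
intros A HA Hdisj HU.
assert (Hm : forall l, mu (sl l) = val f finf l).
{ intros [|p l].
  - rewrite (mu_ext mu _ (symdiff_list ((Some 0, Some 0) :: nil))).
    + rewrite Hmu by discriminate. simpl. destruct (f 0); auto.
    + intro t; unfold sl; simpl; unfold symdiff; simpl; split; [tauto| lra].
  - apply Hmu; discriminate. }
set (U := fun x => exists n, A n x) in *.
destruct (lower_SymM _ HU) as [m Hlow].
assert (HAL : forall n, SymL (A n)) by (intro; apply SymM_L; auto).
assert (HUL : SymL U) by (apply SymM_L; auto).
assert (HAU : forall n t, A n t -> U t) by (intros n t H; exists n; auto).
assert (HAlow : forall n t, A n t -> m <= t) by (intros n t H; apply Hlow; eapply HAU; eauto).
assert (Hcut : forall S x, SymL S -> (forall t, S t -> m <= t) -> SymL (fun t => S t /\ t < x)).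
{ intros S x HS Hl. apply (SymL_ext _ (setI S (symint (Some m) (Some x)))).
  - intro t; unfold setI; simpl; split; intros [H1 H2]; pose proof (Hl t H1); split; auto; lra.
  - apply SymL_I; auto; apply SymL_int. }
set (P := fun x => exists N, (forall n, (N <= n)%nat -> mu (fun t => A n t /\ t < x) = false) /\
   mu (fun t => U t /\ t < x) = xs (fun n => mu (fun t => A n t /\ t < x)) N).
assert (HP : forall x, P x).
{ apply (real_ind P m).
  - intros x Hx. exists 0%nat. split.
    + intros n _. rewrite (mu_ext mu _ (sl nil)); [apply Hm|].
      intro t; unfold sl; simpl; split; [intros [H1 H2]; pose proof (HAlow _ _ H1); lra | tauto].
    + simpl. rewrite (mu_ext mu _ (sl nil)); [apply Hm|].
      intro t; unfold sl; simpl; split; [intros [H1 H2]; pose proof (Hlow _ H1); lra | tauto].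
  - intros x [N [HN HNU]].
    destruct (RL_SymM _ HU x) as [d1 [Hd1 HR1]].
    destruct (classic (U x)) as [Hux|Hux].
    + destruct Hux as [k Hk].
      destruct (RL_SymM _ (HA k) x) as [d2 [Hd2 HR2]].
      exists (Rmin d1 d2). split; [apply Rmin_glb_lt; auto|]. intros y Hy.
      pose proof (Rmin_l d1 d2); pose proof (Rmin_r d1 d2).
      set (I := CI x (Some y)).
      assert (HIL : SymL I).
      { apply (SymL_ext _ (symint (Some x) (Some y))).
        - intro t; symmetry; apply symint_CI; simpl; lra.
        - apply SymL_int. }
      assert (HIk : forall t, I t -> A k t).
      { intros t [H1 H2]; simpl in H2. apply (HR2 t); auto; lra. }
      assert (Hn : forall n, n <> k -> mu (fun t => A n t /\ t < y) = mu (fun t => A n t /\ t < x)).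
      { intros n Hnk; apply mu_ext; intro t; split; intros [H1 H2]; split; auto; try lra.
        destruct (Rlt_dec t x); auto. exfalso; apply (Hdisj n k Hnk t H1), HIk.
        split; simpl; lra. }
      assert (Hk' : mu (fun t => A k t /\ t < y) = xorb (mu (fun t => A k t /\ t < x)) (mu I)).
      { apply (mu_disj mu f finf Hm).
        - apply Hcut; auto. apply HAlow.
        - exact HIL.
        - intros t [_ H1] [H2 _]; lra.
        - intro t; split.
          + intros [H1 H2]. destruct (Rlt_dec t x); [left; auto | right; split; simpl; lra].
          + intros [[H1 H2]|H1]; [split; auto; lra|]. split; auto. destruct H1 as [_ H1]; simpl in H1; lra. }
      assert (HU' : mu (fun t => U t /\ t < y) = xorb (mu (fun t => U t /\ t < x)) (mu I)).
      { apply (mu_disj mu f finf Hm).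
        - apply Hcut; auto.
        - exact HIL.
        - intros t [_ H1] [H2 _]; lra.
        - intro t; split.
          + intros [H1 H2]. destruct (Rlt_dec t x); [left; auto | right; split; simpl; lra].
          + intros [[H1 H2]|H1]; [split; auto; lra|]. split; [eapply HAU; apply HIk; auto|].
            destruct H1 as [_ H1]; simpl in H1; lra. }
      exists (Nat.max N (S k)). split.
      * intros n Hn'. rewrite Hn by lia. apply HN; lia.
      * rewrite HU', HNU. rewrite <- (xs_extend' (fun n => mu (fun t => A n t /\ t < x)) N (Nat.max N (S k))); [| intros n Hn'; apply HN; auto | lia].
        symmetry. apply xs_flip with (k := k); [lia | |exact Hk'].
        intros n Hnk; apply Hn; auto.
    + exists d1. split; auto. intros y Hy.
      assert (Heq : forall S, (forall t, S t -> U t) ->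
                mu (fun t => S t /\ t < y) = mu (fun t => S t /\ t < x)).
      { intros S HSU; apply mu_ext; intro t; split; intros [H1 H2]; split; auto; try lra.
        destruct (Rlt_dec t x); auto. exfalso; apply Hux. apply (HR1 t); [lra|]. auto. }
      exists N. split.
      * intros n Hn. rewrite Heq; [apply HN; auto| apply HAU].
      * rewrite Heq by auto. rewrite HNU. apply xs_ext; intros n _. symmetry; apply Heq, HAU.
  - intros x [d [Hd HPy]].
    destruct (Hcont x) as [t' [Ht' Hft']].
    set (w := Rmax (x - d) t').
    assert (Hw1 : x - d <= w) by apply Rmax_l.
    assert (Hw2 : t' <= w) by apply Rmax_r.
    assert (Hw : w < x) by (unfold w, Rmax; destruct (Rle_dec (x - d) t'); lra).
    set (y := (w + x) / 2).
    destruct (HPy y) as [N [HN HNU]]; [unfold y; lra|].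
    assert (Hsplit : forall S, SymL S -> (forall t, S t -> m <= t) ->
      mu (fun t => S t /\ t < x) = mu (fun t => S t /\ t < y)).
    { intros S HS Hl.
      rewrite (mu_disj mu f finf Hm (fun t => S t /\ t < y) (fun t => S t /\ CI y (Some x) t)); auto.
      - rewrite (mu_const mu f finf Hm S y (Some x) (f x)); auto.
        + apply xorb_false_r.
        + simpl; unfold y; lra.
        + intros [s|] [H1 H2]; simpl in *; [|contradiction].
          destruct (Req_dec s x); [subst; auto|]. apply Hft'. unfold y in H1; lra.
      - apply SymL_clip; auto; simpl; unfold y; lra.
      - intros t [_ H1] [_ [H2 _]]; lra.
      - intro t; split.
        + intros [H1 H2]. destruct (Rlt_dec t y); [left; auto| right; split; auto; split; simpl; lra].
        + intros [[H1 H2]|[H1 [H2 H3]]]; split; auto; simpl in *; unfold y in *; lra. }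
    exists N. split.
    + intros n Hn. rewrite (Hsplit (A n) (HAL n) (HAlow n)); auto.
    + rewrite (Hsplit U HUL Hlow), HNU. apply xs_ext; intros n _. symmetry; apply (Hsplit (A n) (HAL n) (HAlow n)). }
destruct Hinf as [t' Ht'].
set (y := t' + 1).
destruct (HP y) as [N [HN HNU]].
assert (Hsplit2 : forall S, SymL S -> (forall t, S t -> m <= t) ->
  mu S = mu (fun t => S t /\ t < y)).
{ intros S HS Hl.
  rewrite (mu_disj mu f finf Hm (fun t => S t /\ t < y) (fun t => S t /\ CI y None t) S); auto.
  - rewrite (mu_const mu f finf Hm S y None finf); auto.
    + apply xorb_false_r.
    + simpl; auto.
    + intros [s|] [H1 H2]; simpl in *; auto. apply Ht'. unfold y in H1; lra.
  - apply SymL_clip; auto; simpl; auto.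
  - intros t [_ H1] [_ [H2 _]]; lra.
  - intro t; split.
    + intro H1. destruct (Rlt_dec t y); [left; auto| right; split; auto; split; simpl; auto; lra].
    + intros [[H1 H2]|[H1 H2]]; auto. }
exists N. split.
- intros n Hn. rewrite (Hsplit2 (A n) (HAL n) (HAlow n)); auto.
- rewrite xor_upto_xs. rewrite (Hsplit2 U HUL Hlow), HNU.
  apply xs_ext; intros n _. symmetry; apply (Hsplit2 (A n) (HAL n) (HAlow n)).
Qed.
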